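(* Let $A$ and $B$ be integral domains, and assume that the ring $A \times B$ has more than one unit. Then the factroids of $A \times B$ are precisely the subgroups of the form $F \times G$, where $F$ is a factroid of $A$ and $G$ is a factroid of $B$.
   Context: For a ring $R$, $\mathrm{reg}(R)$ is the set of (left) nonzerodivisors of $R$. A factroid of $R$ is an additive subgroup $F$ of $R$ such that for all $a\in R$ and $b\in\mathrm{reg}(R)$, $ba\in F$ implies $a\in F$. *)

(* Defs.v *)
From HB Require Import structures.
From mathcomp Require Import all_boot all_order all_algebra.
Set Implicit Arguments. Unset Strict Implicit. Unset Printing Implicit Defensive.
Import GRing.Theory.
Local Open Scope ring_scope.

Definition left_nzd (R : pzRingType) (b : R) : Prop :=
  forall x : R, b * x = 0 -> x = 0.

Definition add_subgroup (R : pzRingType) (F : R -> Prop) : Prop :=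
  F 0 /\ (forall x y, F x -> F y -> F (x - y)).

Definition factroid (R : pzRingType) (F : R -> Prop) : Prop :=
  add_subgroup F /\
  (forall a b : R, left_nzd b -> F (b * a) -> F a).

Definition more_than_one_unit (R : pzRingType) : Prop :=
  exists u v w z : R, u * v = 1 /\ v * u = 1 /\ w * z = 1 /\ z * w = 1 /\ u <> w.

(* Main.v *)
Require Import Defs.
From mathcomp Require Import all_boot all_order all_algebra.
Set Implicit Arguments. Unset Strict Implicit.
Import GRing.Theory.
Local Open Scope ring_scope.

Lemma nzd_dom (A : idomainType) (b : A) : b != 0 -> left_nzd b.
Proof. by move=> hb x /eqP; rewrite mulf_eq0 (negbTE hb) /= => /eqP. Qed.

Lemma nzd_ne0 (A : idomainType) (b : A) : left_nzd b -> b != 0.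
Proof. move=> h; apply/eqP=> b0; have := h 1; rewrite b0 mul0r => /(_ erefl) /eqP; by rewrite oner_eq0. Qed.

Lemma nzd_pair (A B : idomainType) (b1 : A) (b2 : B) :
  b1 != 0 -> b2 != 0 -> left_nzd ((b1, b2) : (A * B)%type).
Proof.
move=> h1 h2 [x1 x2] [] /eqP; rewrite mulf_eq0 (negbTE h1) /= => /eqP ->.
by move/eqP; rewrite mulf_eq0 (negbTE h2) /= => /eqP ->.
Qed.

Lemma mulP (A B : idomainType) (a c : A) (b d : B) :
  ((a, b) : (A * B)%type) * (c, d) = (a * c, b * d).
Proof. by []. Qed.

Lemma subP (A B : idomainType) (a c : A) (b d : B) :
  ((a, b) : (A * B)%type) - (c, d) = (a - c, b - d).
Proof. by []. Qed.

Lemma subS (A B : idomainType) (S : (A * B)%type -> Prop) :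
  factroid S -> forall x y, S x -> S y -> S (x - y).
Proof. by case=> [[]]. Qed.

Lemma addS (A B : idomainType) (S : (A * B)%type -> Prop) :
  factroid S -> forall x y, S x -> S y -> S (x + y).
Proof.
move=> hS x y hx hy; have := subS hS hx (subS hS (proj1 (proj1 hS)) hy).
by rewrite sub0r opprK.
Qed.

Lemma split1 (A B : idomainType) (S : (A * B)%type -> Prop) (c c' : A) :
  factroid S -> c * c' = 1 -> c != 1 -> forall x, S x -> S (x.1, 0).
Proof.
move=> hS cc' c1 [x1 x2] hx.
have c0 : c != 0 by apply/eqP=> c0; move: cc'; rewrite c0 mul0r => /eqP; rewrite eq_sym oner_eq0.
have h1 : S (c' * x1, x2).
  apply: (proj2 hS _ (c, 1)); first by apply: nzd_pair; rewrite ?oner_eq0.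
  by rewrite mulP mulrA cc' !mul1r.
have h2 := subS hS hx h1.
have c'1 : 1 - c' != 0.
  rewrite subr_eq0; apply/eqP=> e; move: cc'; rewrite -e mulr1 => /eqP; by rewrite (negbTE c1).
apply: (proj2 hS _ (1 - c', 1)); first by apply: nzd_pair; rewrite ?oner_eq0.
move: h2; rewrite mulP subP subrr mulr0; congr S; congr pair.
by rewrite mulrBl mul1r.
Qed.

Lemma split2 (A B : idomainType) (S : (A * B)%type -> Prop) (c c' : B) :
  factroid S -> c * c' = 1 -> c != 1 -> forall x, S x -> S (0, x.2).
Proof.
move=> hS cc' c1 [x1 x2] hx.
have c0 : c != 0 by apply/eqP=> c0; move: cc'; rewrite c0 mul0r => /eqP; rewrite eq_sym oner_eq0.
have h1 : S (x1, c' * x2).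
  apply: (proj2 hS _ (1, c)); first by apply: nzd_pair; rewrite ?oner_eq0.
  by rewrite mulP mulrA cc' !mul1r.
have h2 := subS hS hx h1.
have c'1 : 1 - c' != 0.
  rewrite subr_eq0; apply/eqP=> e; move: cc'; rewrite -e mulr1 => /eqP; by rewrite (negbTE c1).
apply: (proj2 hS _ (1, 1 - c')); first by apply: nzd_pair; rewrite ?oner_eq0.
move: h2; rewrite mulP subP subrr mulr0; congr S; congr pair.
by rewrite mulrBl mul1r.
Qed.

Lemma addP (A B : idomainType) (a c : A) (b d : B) :
  ((a, b) : (A * B)%type) + (c, d) = (a + c, b + d).
Proof. by []. Qed.

Lemma nzd_inv (A B : idomainType) (b : (A * B)%type) :
  left_nzd b -> left_nzd b.1 /\ left_nzd b.2.
Proof.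
case: b => b1 b2 h; split; apply: nzd_dom; apply/eqP=> /= e.
  have := h (1, 0); rewrite mulP e ?mul0r ?mulr0 => /(_ erefl) /(congr1 fst) /eqP; by rewrite oner_eq0.
have := h (0, 1); rewrite mulP e ?mul0r ?mulr0 => /(_ erefl) /(congr1 snd) /eqP; by rewrite oner_eq0.
Qed.

Theorem theorem4p19 (A B : idomainType) :
  more_than_one_unit (A * B)%type ->
  forall S : (A * B)%type -> Prop,
    factroid S <->
    exists (F : A -> Prop) (G : B -> Prop),
      factroid F /\ factroid G /\ (forall x : (A * B)%type, S x <-> F x.1 /\ G x.2).
Proof.
move=> [u [v [w [z [uv [_ [wz [_ uw]]]]]]]] S; split.
- move=> hS.
  have [U [V [UV U1]]] : exists U V : (A * B)%type, U * V = 1 /\ U <> 1.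
    case: (eqVneq u 1) => [u1|u1]; last by exists u, v; split=> // /eqP; rewrite (negbTE u1).
    by exists w, z; split=> // w1; apply: uw; rewrite u1 w1.
  case: U V UV U1 => [U1 U2] [V1 V2] /= UV Un1.
  rewrite mulP in UV; case: UV => UV1 UV2.
  have key : forall x, S x -> S (x.1, 0) /\ S (0, x.2).
    move=> [x1 x2] hx.
    case: (eqVneq U1 1) => [e1|n1].
      case: (eqVneq U2 1) => [e2|n2]; first by case: Un1; rewrite e1 e2.
      have h2 := split2 hS UV2 n2 hx; split=> //.
      by have := subS hS hx h2; rewrite subP subr0 subrr.
    have h1 := split1 hS UV1 n1 hx; split=> //.
    by have := subS hS hx h1; rewrite subP subr0 subrr.
  exists (fun a => S (a, 0)), (fun b => S (0, b)); split; last split.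
  + split; first split.
    * exact: (proj1 (proj1 hS)).
    * by move=> x y hx hy; have := subS hS hx hy; rewrite subP subr0.
    * move=> a b hb hab; apply: (proj2 hS _ (b, 1)).
        by apply: nzd_pair; rewrite ?oner_eq0 // nzd_ne0.
      by rewrite mulP mulr0.
  + split; first split.
    * exact: (proj1 (proj1 hS)).
    * by move=> x y hx hy; have := subS hS hx hy; rewrite subP subr0.
    * move=> a b hb hab; apply: (proj2 hS _ (1, b)).
        by apply: nzd_pair; rewrite ?oner_eq0 // nzd_ne0.
      by rewrite mulP mulr0.
  + move=> [x1 x2]; split; first exact: key.
    by move=> [h1 h2]; have := addS hS h1 h2; rewrite addP addr0 add0r.
- move=> [F [G [hF [hG hS]]]]; split; first split.
  + by apply/hS; split; [exact: (proj1 (proj1 hF)) | exact: (proj1 (proj1 hG))].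
  + move=> [x1 x2] [y1 y2] /hS [hx1 hx2] /hS [hy1 hy2]; apply/hS; rewrite subP; split.
      exact: (proj2 (proj1 hF)).
    exact: (proj2 (proj1 hG)).
  + move=> [a1 a2] [b1 b2] hb /hS; rewrite mulP => -[h1 h2].
    have [n1 n2] := nzd_inv hb; apply/hS; split.
      exact: (proj2 hF _ _ n1 h1).
    exact: (proj2 hG _ _ n2 h2).
Qed.
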